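(* Let $\mathfrak L=\mathbb V\oplus\mathbb W$ be a color gLt-algebra admitting a quasi-multiplicative basis $\mathfrak B=\{e_i\}_{i\in I}$ of $\mathbb W\neq0$ which is $\mu$-quasi-multiplicative. If $\mathfrak L$ is centerless (i.e. $\mathcal Z(\mathfrak L)=0$) and $\mathbb V$ is tight, then $\mathfrak L=\bigoplus_k\mathfrak J_k$ is the direct sum of the family of its minimal color gLt-ideals, each one admitting a $\mu$-quasi-multiplicative basis inherited by the one of $\mathfrak L$.
   Context: Let $\mathbb F$ be a field, $\mathbb G$ an abelian group, $n\ge 2$, and $\epsilon:\mathbb G\times\mathbb G\to\mathbb F\setminus\{0\}$ a bicharacter ($\epsilon(k,g+h)=\epsilon(k,g)\epsilon(k,h)$, $\epsilon(g+h,k)=\epsilon(g,k)\epsilon(h,k)$, $\epsilon(g,h)\epsilon(h,g)=1$). A graded $n$-ary algebra is a $\mathbb G$-graded vector space $\mathfrak L=\bigoplus_{g\in\mathbb G}\mathfrak L_g$ with an $n$-linear map $\langle\cdot,\dots,\cdot\rangle:\mathfrak L^n\to\mathfrak L$ such that $\langle\mathfrak L_{g_1},\dots,\mathfrak L_{g_n}\rangle\subset\mathfrak L_{g_1+\dots+g_n}$. For $\sigma\in\mathbb S_n$ write $\langle x_1,\dots,x_n\rangle_\sigma:=\langle x_{\sigma(1)},\dots,x_{\sigma(n)}\rangle$; for subsets $A_1,\dots,A_n$, $\langle A_1,\dots,A_n\rangle_\sigma$ denotes the linear span of all $\langle x_1,\dots,x_n\rangle_\sigma$ with $x_r\in A_r$.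 A color gLt-algebra is a graded $n$-ary algebra satisfying, for each $k=1,\dots,n$ and fixed scalars $\alpha^{\sigma_1,\sigma_2}_{i,j,k}\in\mathbb F$, the color version (each term on the right multiplied by the product of values of $\epsilon$ on the degrees of the homogeneous arguments transposed in passing from the left-hand order to the order of that term) of the identity $\langle y_1,\dots,y_{k-1},\langle x_1,\dots,x_n\rangle,y_k,\dots,y_{n-1}\rangle=\sum_{1\le i,j\le n,\,\sigma_1\in\mathbb S_n,\,\sigma_2\in\mathbb S_{n-1}}\alpha^{\sigma_1,\sigma_2}_{i,j,k}\langle x_{\sigma_1(1)},\dots,x_{\sigma_1(i-1)},\langle y_{\sigma_2(1)},\dots,y_{\sigma_2(j-1)},x_{\sigma_1(i)},y_{\sigma_2(j)},\dots,y_{\sigma_2(n-1)}\rangle,x_{\sigma_1(i+1)},\dots,x_{\sigma_1(n)}\rangle$. A $\mathbb G$-graded subspace $\mathcal I\subset\mathfrak L$ is a color gLt-ideal if $\langle\mathcal I,\mathfrak L,\dots,\mathfrak L\rangle_\sigma\subset\mathcal I$ for every $\sigma\in\mathbb S_n$. The center is $\mathcal Z(\mathfrak L):=\{x\in\mathfrak L:\langle x,\mathfrak L,\dots,\mathfrak L\rangle_\sigma=0\text{ for all }\sigma\in\mathbb S_n\}$. $\mathfrak L$ admits a quasi-multiplicative basis if $\mathfrak L=\mathbb V\oplus\mathbb W$ with $\mathbb V$, $\mathbb W\ne0$ graded subspaces and $\mathfrak B=\{e_i\}_{i\in I}$ a basis of homogeneous elements of $\mathbb W$ such that: (1) for $i_1,\dots,i_n\in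 I$, either $\langle e_{i_1},\dots,e_{i_n}\rangle\in\mathbb Fe_j$ for some $j\in I$ or $\langle e_{i_1},\dots,e_{i_n}\rangle\in\mathbb V$; (2) for $0<k<n$, $i_1,\dots,i_k\in I$ and $\sigma\in\mathbb S_n$, $\langle e_{i_1},\dots,e_{i_k},\mathbb V,\dots,\mathbb V\rangle_\sigma\subset\mathbb Fe_{j_\sigma}$ for some $j_\sigma\in I$; (3) either $\langle\mathbb V,\dots,\mathbb V\rangle\subset\mathbb Fe_j$ for some $j\in I$ or $\langle\mathbb V,\dots,\mathbb V\rangle\subset\mathbb V$. A color gLt-ideal $\mathfrak S$ admits a basis inherited by the one of $\mathfrak L$ if $\mathfrak S=\mathbb V_{\mathfrak S}\oplus\mathbb W_{\mathfrak S}$ with $\mathbb V_{\mathfrak S}$ a graded subspace of $\mathbb V$ and $0\ne\mathbb W_{\mathfrak S}$ a graded subspace of $\mathbb W$ admitting a subset $\mathfrak B'\subset\mathfrak B$ as a basis (then $\mathfrak S$ is itself a color gLt-algebra with quasi-multiplicative basis $\mathfrak B'$ of $\mathbb W_{\mathfrak S}$). A color gLt-algebra with a quasi-multiplicative basis is minimal if its only nonzero color gLt-ideal admitting a basis inherited by its own is itself; a minimal color gLt-ideal of $\mathfrak L$ is a color gLt-ideal with an inherited basis which, as such an algebra, is minimal. Index maps (defined for any such algebra, here written for $\mathfrak L$): let $v$ be a symbol not in $I$, $\mathfrak I:=I\,\dot\cup\,\{v\}$; for each $j\in\mathfrak I$ take a new symbol $\overline j$, $\overline I:=\{\overline i:i\in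 I\}$, $\overline{\mathfrak I}:=\overline I\,\dot\cup\,\{\overline v\}$; set $\overline{(\overline j)}:=j$. Put $u_j:=e_j$ for $j\in I$ and $u_v:=\mathbb V$. For $\sigma\in\mathbb S_n$ and $(j_1,\dots,j_n)\in\mathfrak I^n$ let $a_\sigma(j_1,\dots,j_n)=\{r\}$ if $r\in I$ and $0\ne\langle u_{j_1},\dots,u_{j_n}\rangle_\sigma\subset\mathbb Fe_r$, $=\{v\}$ if $0\ne\langle u_{j_1},\dots,u_{j_n}\rangle_\sigma\subset\mathbb V$, and $=\emptyset$ otherwise. For $j,j_2,\dots,j_n\in\mathfrak I$ let $b_\sigma(j,\overline j_2,\dots,\overline j_n):=\{x\in\mathfrak I: a_\sigma(x,j_2,\dots,j_n)=\{j\}\}$. Define $\mu$ on $(\mathfrak I\,\dot\cup\,\overline{\mathfrak I})\times(\mathfrak I^{n-1}\,\dot\cup\,\overline{\mathfrak I}^{n-1})$ with values subsets of $\mathfrak I$ by: $\mu(j,j_1,\dots,j_{n-1})=\bigcup_{\sigma\in\mathbb S_n}a_\sigma(j,j_1,\dots,j_{n-1})$ for $j,j_1,\dots,j_{n-1}\in\mathfrak I$; $\mu(j,\overline j_1,\dots,\overline j_{n-1})=\bigcup_{\sigma\in\mathbb S_n}b_\sigma(j,\overline j_1,\dots,\overline j_{n-1})$ for $j,j_1,\dots,j_{n-1}\in\mathfrak I$; $\mu(\overline j,j_1,\dots,j_{n-1})=\bigcup_{1\le k\le n-1,\ \sigma\in\mathbb S_n}b_\sigma(j_k,\overline j,\overline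 j_1,\dots,\overline j_{k-1},\overline j_{k+1},\dots,\overline j_{n-1})$ for $j,j_1,\dots,j_{n-1}\in\mathfrak I$; and $\mu(\overline j,\overline j_1,\dots,\overline j_{n-1})=\emptyset$. $\mathbb V$ is tight if $\mathbb V=\{0\}$ or $\mathbb V=\sum\{\mathbb F\langle e_{i_1},\dots,e_{i_n}\rangle: i_1,\dots,i_n\in I,\ \mu(i_1,\dots,i_n)=\{v\}\}$. The basis $\mathfrak B$ is $\mu$-quasi-multiplicative if whenever $i\in I$, $k_1\in\mathfrak I\,\dot\cup\,\overline{\mathfrak I}$ and $(k_2,\dots,k_n)\in\mathfrak I^{n-1}\,\dot\cup\,\overline{\mathfrak I}^{n-1}$ satisfy $i\in\mu(k_1,k_2,\dots,k_n)$, then $e_i\in\langle w_{k_1},\dots,w_{k_n}\rangle_\sigma$ (linear span) for some $\sigma\in\mathbb S_n$, where $w_k:=e_j$ if $k\in\{j,\overline j\}$ with $j\in I$, and $w_k:=\mathbb V$ if $k\in\{v,\overline v\}$. *)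

(* Defs.v *)
From HB Require Import structures.
From mathcomp Require Import all_boot all_order all_algebra all_fingroup.
Set Implicit Arguments.
Unset Strict Implicit.
Unset Printing Implicit Defensive.
Import GRing.Theory.
Local Open Scope ring_scope.

Section ColorGLt.

Variables (F : fieldType) (L : lmodType F).

Definition subspace (S : L -> Prop) :=
  S 0 /\ (forall (a : F) x y, S x -> S y -> S (a *: x + y)).

Inductive span (A : L -> Prop) : L -> Prop :=
| span0 : span A 0
| spanS x : A x -> span A x
| spanZD (a : F) x y : span A x -> span A y -> span A (a *: x + y).

Definition line (v : L) : L -> Prop := fun z => exists c : F, z = c *: v.
Definition subset (A B : L -> Prop) := forall x, A x -> B x.
Definition eqset (A B : L -> Prop) := forall x, A x <-> B x.
Definition nonzero (A : L -> Prop) := exists x, A x /\ x <> 0.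

Variables (G : zmodType) (grade : G -> L -> Prop).

Definition homogeneous (x : L) := exists g, grade g x.

Definition is_grading :=
  (forall g, subspace (grade g)) /\
  (forall x, span homogeneous x) /\
  (forall (gs : seq G) (x : G -> L), uniq gs -> (forall g, grade g (x g)) ->
     \sum_(g <- gs) x g = 0 -> forall g, g \in gs -> x g = 0).

Definition graded_subspace (S : L -> Prop) :=
  subspace S /\ (forall x, S x -> span (fun y => S y /\ homogeneous y) x).

Definition bicharacter (eps : G -> G -> F) :=
  (forall g h, eps g h != 0) /\
  (forall k g h, eps k (g + h) = eps k g * eps k h) /\
  (forall g h k, eps (g + h) k = eps g k * eps h k) /\
  (forall g h, eps g h * eps h g = 1).

Variables (n : nat) (p : {ffun 'I_n -> L} -> L).

Definition upd (x : {ffun 'I_n -> L}) (k : 'I_n) (v : L) : {ffun 'I_n -> L} :=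
  [ffun r => if r == k then v else x r].

Definition multilinear :=
  forall (x : {ffun 'I_n -> L}) (k : 'I_n) (a : F) (y z : L),
    p (upd x k (a *: y + z)) = a *: p (upd x k y) + p (upd x k z).

Definition graded_product :=
  forall (x : {ffun 'I_n -> L}) (gs : 'I_n -> G),
    (forall r, grade (gs r) (x r)) -> grade (\sum_r gs r) (p x).

(* product of a list of arguments (only the first n entries matter) *)
Definition app (s : seq L) : L := p [ffun r : 'I_n => nth 0 s r].

Definition prodsp (A : 'I_n -> L -> Prop) (s : 'S_n) : L -> Prop :=
  span (fun z => exists x : {ffun 'I_n -> L},
          (forall r, A r (x r)) /\ z = p [ffun r => x (s r)]).

(* epsilon-factor of the reordering of the labelled atoms s into t:
   product of eps(deg a, deg b) over the pairs (a, b) with a before b in s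
   and b before a in t. *)
Definition colorfac (eps : G -> G -> F) (deg : nat -> G) (s t : seq nat) : F :=
  \prod_(a <- s) \prod_(b <- s | (index a s < index b s)%N && (index b t < index a t)%N)
     eps (deg a) (deg b).

(* color gLt identity for all k (0-based positions). Atoms: x_r has label r,
   y_r has label n + r. *)
Definition gLt_identity (eps : G -> G -> F)
    (alpha : 'I_n -> 'I_n -> 'I_n -> 'S_n -> 'S_(n.-1) -> F) :=
  forall (k : 'I_n) (x y : nat -> L) (dx dy : nat -> G),
    (forall r, (r < n)%N -> grade (dx r) (x r)) ->
    (forall r, (r < n.-1)%N -> grade (dy r) (y r)) ->
    let deg (l : nat) := if (l < n)%N then dx l else dy (l - n)%N in
    let xs := mkseq x n in
    let ys := mkseq y n.-1 in
    let xl := iota 0 n in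
    let yl := map (addn n) (iota 0 n.-1) in
    app (take k ys ++ app xs :: drop k ys) =
    \sum_(i : 'I_n) \sum_(j : 'I_n) \sum_(s1 : 'S_n) \sum_(s2 : 'S_(n.-1))
      let xs' := [seq x (s1 r) | r <- enum 'I_n] in
      let ys' := [seq y (s2 r) | r <- enum 'I_(n.-1)] in
      let xl' := [seq nat_of_ord (s1 r) | r <- enum 'I_n] in
      let yl' := [seq (n + s2 r)%N | r <- enum 'I_(n.-1)] in
      (alpha i j k s1 s2 *
       colorfac eps deg (take k yl ++ xl ++ drop k yl)
         (take i xl' ++ (take j yl' ++ nth 0%N xl' i :: drop j yl') ++ drop i.+1 xl')) *:
      app (take i xs' ++ app (take j ys' ++ nth 0 xs' i :: drop j ys') :: drop i.+1 xs').

Definition color_gLt_algebra (eps : G -> G -> F) :=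
  exists alpha, gLt_identity eps alpha.

Variables (I : eqType) (e : I -> L).

Definition Wsp (J : I -> Prop) : L -> Prop := span (fun z => exists i, J i /\ z = e i).

Definition lin_indep (J : I -> Prop) :=
  forall (s : seq I) (c : I -> F), uniq s -> (forall i, i \in s -> J i) ->
    \sum_(i <- s) c i *: e i = 0 -> forall i, i \in s -> c i = 0.

(* {e_i : J i} is a quasi-multiplicative basis of W = Wsp J, where the algebra
   (carrier Lc, a subspace of L closed under p) is Lc = V (+) W. *)
Definition qm_basis (Lc V : L -> Prop) (J : I -> Prop) :=
  graded_subspace V /\ graded_subspace (Wsp J) /\ subset V Lc /\ subset (Wsp J) Lc /\
  (forall x, Lc x -> exists v w, V v /\ Wsp J w /\ x = v + w) /\
  (forall x, V x -> Wsp J x -> x = 0) /\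
  nonzero (Wsp J) /\
  (forall i, J i -> homogeneous (e i)) /\ lin_indep J /\
  (forall ix : 'I_n -> I, (forall r, J (ix r)) ->
     (exists j, J j /\ line (e j) (p [ffun r => e (ix r)])) \/ V (p [ffun r => e (ix r)])) /\
  (forall (k : nat) (ix : 'I_n -> I) (s : 'S_n), (0 < k < n)%N ->
     (forall r : 'I_n, (r < k)%N -> J (ix r)) ->
     exists j, J j /\
       subset (prodsp (fun r : 'I_n => if (r < k)%N then (fun z => z = e (ix r)) else V) s)
              (line (e j))) /\
  ((exists j, J j /\ subset (prodsp (fun _ => V) 1%g) (line (e j))) \/
   subset (prodsp (fun _ => V) 1%g) V).

(* option I = I disjoint-union {v}, None standing for v *)
Definition inJ (J : I -> Prop) (j : option I) : Prop :=
  if j is Some i then J i else True.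

Definition u (V : L -> Prop) (j : option I) : L -> Prop :=
  if j is Some i then (fun z => z = e i) else V.

Definition ocons (j : option I) (js : nat -> option I) : nat -> option I :=
  fun r => if r is r'.+1 then js r' else j.

Definition skipk (k : nat) (js : nat -> option I) : nat -> option I :=
  fun r => if (r < k)%N then js r else js r.+1.

(* a_sigma(j_1,...,j_n) as a subset of option I; tuples are nat-indexed from 0 *)
Definition a_map (V : L -> Prop) (J : I -> Prop) (s : 'S_n) (js : nat -> option I)
  : option I -> Prop := fun t =>
  let S := prodsp (fun r : 'I_n => u V (js r)) s in
  nonzero S /\
  match t with
  | Some r => J r /\ subset S (line (e r))
  | None => subset S V
  end.

(* b_sigma(j, jbar_2, ..., jbar_n) = {x : a_sigma(x, j_2, ..., j_n) = {j}} *)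
Definition b_map (V : L -> Prop) (J : I -> Prop) (s : 'S_n) (j : option I)
  (js : nat -> option I) : option I -> Prop := fun x =>
  inJ J x /\ (forall t, a_map V J s (ocons x js) t <-> t = j).

(* mu(k_1, k_2, ..., k_n); the booleans say whether k_1, resp. (k_2,...,k_n),
   are barred *)
Definition mu_map (V : L -> Prop) (J : I -> Prop) (b1 : bool) (j : option I)
  (b2 : bool) (js : nat -> option I) : option I -> Prop :=
  match b1, b2 with
  | false, false => fun t => exists s, a_map V J s (ocons j js) t
  | false, true => fun t => exists s, b_map V J s j js t
  | true, false => fun t => exists (k : nat) s, (k < n.-1)%N /\
                      b_map V J s (js k) (ocons j (skipk k js)) t
  | true, true => fun _ => False
  end.

Definition tight (V : L -> Prop) (J : I -> Prop) :=
  (forall x, V x <-> x = 0) \/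
  (forall x, V x <-> span (fun z => exists ix : nat -> I,
        (forall r, (r < n)%N -> J (ix r)) /\
        (forall t, mu_map V J false (Some (ix 0%N)) false (fun r => Some (ix r.+1)) t
                   <-> t = None) /\
        z = p [ffun r : 'I_n => e (ix r)]) x).

Definition mu_qm (V : L -> Prop) (J : I -> Prop) :=
  forall (b1 : bool) (j : option I) (b2 : bool) (js : nat -> option I) (i : I),
    inJ J j -> (forall r, (r < n.-1)%N -> inJ J (js r)) -> J i ->
    mu_map V J b1 j b2 js (Some i) ->
    exists s : 'S_n, prodsp (fun r : 'I_n => u V (ocons j js r)) s (e i).

Definition center (x : L) :=
  forall s : 'S_n,
    subset (prodsp (fun r : 'I_n => if nat_of_ord r == 0%N then (fun z => z = x)
                                    else (fun _ => True)) s) (fun z => z = 0).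

Definition ideal (Lc T : L -> Prop) :=
  graded_subspace T /\ subset T Lc /\
  forall s : 'S_n,
    subset (prodsp (fun r : 'I_n => if nat_of_ord r == 0%N then T else Lc) s) T.

Definition inherited (V : L -> Prop) (J : I -> Prop) (T VT : L -> Prop) (JT : I -> Prop) :=
  graded_subspace VT /\ subset VT V /\ (forall i, JT i -> J i) /\
  graded_subspace (Wsp JT) /\ nonzero (Wsp JT) /\
  (forall x, VT x -> Wsp JT x -> x = 0) /\
  (forall x, T x <-> exists v w, VT v /\ Wsp JT w /\ x = v + w).

Definition minimal_alg (Lc V : L -> Prop) (J : I -> Prop) :=
  forall (T VT : L -> Prop) (JT : I -> Prop),
    ideal Lc T -> inherited V J T VT JT -> nonzero T -> eqset T Lc.

(* minimal color gLt-ideal S of L (whose quasi-mult. basis is (V, all of I)),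
   with inherited basis (VS, JS) *)
Definition minimal_ideal (V S VS : L -> Prop) (JS : I -> Prop) :=
  ideal (fun _ => True) S /\ inherited V (fun _ => True) S VS JS /\
  minimal_alg S VS JS.

End ColorGLt.

Definition direct_sum (F : fieldType) (L : lmodType F) (K : eqType) (Js : K -> L -> Prop) :=
  (forall x : L, span (fun z => exists k, Js k z) x) /\
  (forall (ks : seq K) (z : K -> L), uniq ks -> (forall k, Js k (z k)) ->
     \sum_(k <- ks) z k = 0 -> forall k, k \in ks -> z k = 0).

(* Main.v *)
Require Import Defs.
From HB Require Import structures.
From mathcomp Require Import all_boot all_order all_algebra all_fingroup.
From mathcomp Require Import zify.
From Stdlib Require Import Relations ClassicalEpsilon FunctionalExtensionality PropExtensionality ProofIrrelevance Classical.
Set Implicit Arguments.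
Unset Strict Implicit.
Unset Printing Implicit Defensive.
Import GRing.Theory.
Local Open Scope ring_scope.

Notation dspan := Defs.span.
Notation dsubset := Defs.subset.

Section Spans.
Variables (F : fieldType) (L : lmodType F).
Implicit Types (A B Q : L -> Prop).

Lemma subspace_span A : subspace (dspan A).
Proof. split; [exact: span0 | move=> a x y; exact: spanZD]. Qed.

Lemma span_sub A Q : subspace Q -> dsubset A Q -> dsubset (dspan A) Q.
Proof.
move=> [Q0 QZD] AQ x; elim=> [|z Hz|a z y _ Hz _ Hy].
- exact: Q0.
- exact: AQ.
- exact: QZD.
Qed.

Lemma span_mono A B : dsubset A B -> dsubset (dspan A) (dspan B).
Proof. move=> AB; apply: span_sub; first exact: subspace_span.
by move=> x /AB; exact: spanS. Qed.

Lemma sub0 Q : subspace Q -> Q 0.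
Proof. by case. Qed.

Lemma subD Q x y : subspace Q -> Q x -> Q y -> Q (x + y).
Proof. by move=> [_ H] Hx Hy; have := H 1 x y Hx Hy; rewrite scale1r. Qed.

Lemma subZ Q a x : subspace Q -> Q x -> Q (a *: x).
Proof. by move=> [H0 H] Hx; have := H a x 0 Hx H0; rewrite addr0. Qed.

Lemma subN Q x : subspace Q -> Q x -> Q (- x).
Proof. by move=> HQ Hx; rewrite -scaleN1r; exact: subZ. Qed.

Lemma subB Q x y : subspace Q -> Q x -> Q y -> Q (x - y).
Proof. by move=> HQ Hx Hy; apply: subD => //; exact: subN. Qed.

Lemma sub_big Q (T : Type) (s : seq T) (P : pred T) (f : T -> L) :
  subspace Q -> (forall i, P i -> Q (f i)) -> Q (\sum_(i <- s | P i) f i).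
Proof.
move=> HQ Hf; apply: (big_rec Q); first exact: sub0.
by move=> i x Pi Qx; apply: subD => //; exact: Hf.
Qed.

Lemma span_id Q x : subspace Q -> dspan Q x -> Q x.
Proof. by move=> HQ; apply: span_sub. Qed.

Lemma subspace_line (v : L) : subspace (line v).
Proof.
split; first by exists 0; rewrite scale0r.
by move=> a x y [c ->] [d ->]; exists (a * c + d); rewrite scalerDl scalerA.
Qed.

Lemma subspace_zero : subspace (fun z : L => z = 0).
Proof. by split=> // a x y -> ->; rewrite scaler0 addr0. Qed.

Lemma subspace_sum A B : subspace A -> subspace B ->
  subspace (fun x => exists v w, A v /\ B w /\ x = v + w).
Proof.
move=> HA HB; split; first by exists 0, 0; rewrite addr0; split; [exact: sub0|split; [exact: sub0|]].
move=> a x y [v1 [w1 [H1 [H2 ->]]]] [v2 [w2 [H3 [H4 ->]]]].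
exists (a *: v1 + v2), (a *: w1 + w2); split; first by case: HA => _; apply.
split; first by case: HB => _; apply.
by rewrite scalerDr addrACA.
Qed.

Lemma spanS' A x : A x -> dspan A x.
Proof. exact: spanS. Qed.

Lemma spanD A x y : dspan A x -> dspan A y -> dspan A (x + y).
Proof. apply: subD; exact: subspace_span. Qed.

Lemma spanZ A a x : dspan A x -> dspan A (a *: x).
Proof. apply: subZ; exact: subspace_span. Qed.

End Spans.

Section Multi.
Variables (F : fieldType) (L : lmodType F) (n : nat) (p : {ffun 'I_n -> L} -> L).
Hypothesis pml : multilinear p.

Lemma upd_id (f : {ffun 'I_n -> L}) r : upd f r (f r) = f.
Proof. by apply/ffunP => q; rewrite ffunE; case: eqP => // ->. Qed.

Lemma p_zero (f : {ffun 'I_n -> L}) r : f r = 0 -> p f = 0.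
Proof.
move=> fr0; rewrite -(upd_id f r) fr0.
have H := pml f r (-1) 0 0.
by rewrite scaler0 addr0 scaleN1r addNr in H.
Qed.

Lemma p_expand1 Q (At : L -> Prop) (f : {ffun 'I_n -> L}) r0 :
  subspace Q -> dspan At (f r0) -> (forall a, At a -> Q (p (upd f r0 a))) -> Q (p f).
Proof.
move=> HQ Hs Ha; rewrite -(upd_id f r0).
elim: Hs => [|x Ax|a x y _ Hx _ Hy]; last 2 first.
- exact: Ha.
- rewrite pml; case: HQ => _; apply=> //.
rewrite (p_zero (r := r0)) ?ffunE ?eqxx //; exact: sub0.
Qed.

Lemma p_expand Q (At : 'I_n -> L -> Prop) (f : {ffun 'I_n -> L}) :
  subspace Q -> (forall r, dspan (At r) (f r)) ->
  (forall g : {ffun 'I_n -> L}, (forall r, At r (g r)) -> Q (p g)) -> Q (p f).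
Proof.
move=> HQ Hf Hg.
suff H : forall k (f : {ffun 'I_n -> L}), (forall r : 'I_n, (r < k)%N -> dspan (At r) (f r)) ->
   (forall r : 'I_n, (k <= r)%N -> At r (f r)) -> Q (p f).
  by apply: (H n) => // r; rewrite leqNgt ltn_ord.
elim=> [|k IH] f0 H1 H2; first by apply: Hg => r; apply: H2.
case: (ltnP k n) => kn; last first.
  apply: IH => r rk; first by apply: H1; apply: ltnW.
  by have := ltn_ord r; rewrite ltnNge (leq_trans kn rk).
pose r0 := Ordinal kn.
apply: (p_expand1 (r0 := r0)) => //; first by apply: H1 => /=.
move=> a Aa; apply: IH => r; rewrite ffunE.
- move=> rk; case: eqP => [/(congr1 val)/= rr0|_]; first by rewrite rr0 ltnn in rk.
  by apply: H1; apply: ltnW.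
- case: eqP => [->//|/eqP rr0] kr; apply: H2.
  by rewrite ltn_neqAle kr andbT; apply: contra rr0 => /eqP h; apply/eqP/val_inj.
Qed.

Lemma prodsp_gen (A : 'I_n -> L -> Prop) (s : 'S_n) (x : {ffun 'I_n -> L}) :
  (forall r, A r (x r)) -> prodsp p A s (p [ffun r => x (s r)]).
Proof. by move=> Hx; apply: spanS; exists x. Qed.

Lemma prodsp_sub (A : 'I_n -> L -> Prop) (s : 'S_n) Q : subspace Q ->
  (forall x : {ffun 'I_n -> L}, (forall r, A r (x r)) -> Q (p [ffun r => x (s r)])) ->
  dsubset (prodsp p A s) Q.
Proof. by move=> HQ H; apply: span_sub => // z [x [Hx ->]]; exact: H. Qed.

Lemma subspace_prodsp A (s : 'S_n) : subspace (prodsp p A s).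
Proof. exact: subspace_span. Qed.

Lemma prodsp_mono (A B : 'I_n -> L -> Prop) (s : 'S_n) : (forall r, dsubset (A r) (B r)) ->
  dsubset (prodsp p A s) (prodsp p B s).
Proof.
move=> AB; apply: prodsp_sub; first exact: subspace_prodsp.
by move=> x Hx; apply: prodsp_gen => r; apply: AB.
Qed.

Lemma prodsp_reindex (A : 'I_n -> L -> Prop) (s t : 'S_n) :
  eqset (prodsp p A s) (prodsp p (fun r => A (t r)) (s * t^-1)%g).
Proof.
move=> z; split; move: z; apply: prodsp_sub; try exact: subspace_prodsp.
- move=> x Hx.
  have -> : p [ffun r => x (s r)] = p [ffun r => [ffun q => x (t q)] ((s * t^-1)%g r)].
    by congr p; apply/ffunP => r; rewrite !ffunE permM permKV.
  by apply: prodsp_gen => r; rewrite ffunE.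
- move=> x Hx.
  have -> : p [ffun r => x ((s * t^-1)%g r)] = p [ffun r => [ffun q => x (t^-1 q)%g] (s r)].
    by congr p; apply/ffunP => r; rewrite !ffunE permM.
  by apply: prodsp_gen => r; rewrite ffunE; have := Hx (t^-1 r)%g; rewrite permKV.
Qed.

End Multi.

Section Main.
Variables (F : fieldType) (L : lmodType F) (G : zmodType) (grade : G -> L -> Prop)
  (m : nat) (p : {ffun 'I_m.+1 -> L} -> L) (eps : G -> G -> F) (I : eqType)
  (e : I -> L) (V : L -> Prop).
Hypotheses (m_gt0 : (0 < m)%N) (Hgr : is_grading grade) (Hml : multilinear p)
  (Hgp : graded_product grade p) (HgLt : color_gLt_algebra grade p eps)
  (Hqm : qm_basis grade p e (fun _ => True) V (fun _ => True))
  (Hmu : mu_qm p e V (fun _ => True)) (Hcen : forall x, center p x -> x = 0)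
  (Htight : tight p e V (fun _ => True)).

Local Notation n := m.+1.
Local Notation WT := (Wsp e (fun _ => True)).

Lemma V_subspace : subspace V.
Proof. by case: Hqm => [[HV _] _]. Qed.

Lemma decompL x : exists v w, V v /\ WT w /\ x = v + w.
Proof. by case: Hqm => [_ [_ [_ [_ [H _]]]]]; apply: H. Qed.

Lemma VW0 x : V x -> WT x -> x = 0.
Proof. by case: Hqm => [_ [_ [_ [_ [_ [H _]]]]]]; apply: H. Qed.

Lemma e_homog i : homogeneous grade (e i).
Proof. by case: Hqm => [_ [_ [_ [_ [_ [_ [_ [H _]]]]]]]]; apply: H. Qed.

Lemma linind : lin_indep e (fun _ => True).
Proof. by case: Hqm => [_ [_ [_ [_ [_ [_ [_ [_ [H _]]]]]]]]]. Qed.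

Lemma qm1 (ix : 'I_n -> I) :
  (exists j, line (e j) (p [ffun r => e (ix r)])) \/ V (p [ffun r => e (ix r)]).
Proof.
case: Hqm => [_ [_ [_ [_ [_ [_ [_ [_ [_ [H _]]]]]]]]]].
by case: (H ix (fun _ => Logic.I)) => [[j [_ Hj]]|]; [left; exists j | right].
Qed.

Lemma qm2 (k : nat) (ix : 'I_n -> I) (s : 'S_n) : (0 < k < n)%N ->
  exists j, dsubset (prodsp p (fun r : 'I_n => if (r < k)%N then (fun z => z = e (ix r)) else V) s)
              (line (e j)).
Proof.
case: Hqm => [_ [_ [_ [_ [_ [_ [_ [_ [_ [_ [H _]]]]]]]]]]] Hk.
by case: (H k ix s Hk (fun _ _ => Logic.I)) => j [_ Hj]; exists j.
Qed.

Lemma e_neq0 i : e i != 0.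
Proof.
apply/eqP => Hi; have := linind (s := [:: i]) (c := fun _ => 1) erefl (fun _ _ => Logic.I).
rewrite big_seq1 scale1r Hi => /(_ erefl i); rewrite mem_seq1 eqxx => /(_ erefl) /eqP.
by rewrite oner_eq0.
Qed.

Lemma e_W i : WT (e i).
Proof. by apply: spanS; exists i. Qed.

Lemma line_W j y : line (e j) y -> WT y.
Proof. move=> [d ->]; apply: spanZ; exact: e_W. Qed.

Lemma e_notV i : ~ V (e i).
Proof. by move=> Hv; have := e_neq0 i; rewrite (VW0 Hv (e_W i)) eqxx. Qed.

Definition tprop (t : option I) (y : L) : Prop :=
  match t with Some j => line (e j) y | None => V y end.

Lemma line_nz j y : line (e j) y -> y != 0 -> exists d, d != 0 /\ y = d *: e j.
Proof.
move=> [d ->] Hy; exists d; split=> //; apply: contraNneq Hy => ->; by rewrite scale0r.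
Qed.

Lemma line_inv (S : L -> Prop) j y : subspace S -> S y -> line (e j) y -> y != 0 -> S (e j).
Proof.
move=> HS Sy Hl Hy; have [d [dn0 yd]] := line_nz Hl Hy.
have -> : e j = d^-1 *: y by rewrite yd scalerA mulVf // scale1r.
exact: subZ.
Qed.

Lemma UQ t1 t2 y : y != 0 -> tprop t1 y -> tprop t2 y -> t1 = t2.
Proof.
move=> Hy; case: t1 => [j1|]; case: t2 => [j2|] //=.
- move=> H1 H2; case: (j1 =P j2) => [->//|/eqP jn].
  have [d1 [d1n y1]] := line_nz H1 Hy; have [d2 [d2n y2]] := line_nz H2 Hy.
  have := linind (s := [:: j1; j2]) (c := fun i => if i == j1 then d1 else - d2).
  rewrite /= inE jn /= => /(_ erefl (fun _ _ => Logic.I)).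
  have jn' : (j2 == j1) = false by rewrite eq_sym (negbTE jn).
  rewrite big_cons big_seq1 eqxx jn'.
  rewrite scaleNr -y1 -y2 subrr => /(_ erefl j1); rewrite inE eqxx => /(_ erefl) h.
  by move: d1n; rewrite h eqxx.
- move=> H1 H2; by move: Hy; rewrite (VW0 H2 (line_W H1)) eqxx.
- move=> H1 H2; by move: Hy; rewrite (VW0 H1 (line_W H2)) eqxx.
Qed.

Lemma prod_homog (ix : 'I_n -> I) : homogeneous grade (p [ffun r => e (ix r)]).
Proof.
have [gs Hgs] := fin_all_exists (fun r : 'I_n => e_homog (ix r)).
exists (\sum_r gs r); apply: Hgp => r; rewrite ffunE; exact: Hgs.
Qed.

Definition Rel (a b : I) : Prop := exists (A : 'I_n -> option I) (s : 'S_n),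
  nonzero (prodsp p (fun r => u e V (A r)) s) /\ (exists r, A r = Some a) /\
  ((exists r, A r = Some b) \/ dsubset (prodsp p (fun r => u e V (A r)) s) (line (e b))).

Definition Eqv := clos_refl_sym_trans I Rel.

Definition cls (i : I) : I := epsilon (inhabits i) (fun j => Eqv j i).

Lemma cls_Eqv i : Eqv (cls i) i.
Proof. by apply: (epsilon_spec (inhabits i) (fun j => Eqv j i)); exists i; apply: rst_refl. Qed.

Lemma cls_eq i j : Eqv i j -> cls i = cls j.
Proof.
move=> Hij; rewrite /cls.
have -> : (fun k => Eqv k i) = (fun k => Eqv k j).
  apply: functional_extensionality => k; apply: propositional_extensionality; split=> H.
  - exact: rst_trans H Hij.
  - exact: rst_trans H (rst_sym _ _ _ _ Hij).
by congr epsilon; apply: proof_irrelevance.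
Qed.

Lemma Eqv_of_cls a b : cls a = cls b -> Eqv a b.
Proof.
move=> H; apply: rst_trans (rst_sym _ _ _ _ (cls_Eqv a)) _.
by rewrite H; apply: cls_Eqv.
Qed.

Lemma cls_idem i : cls (cls i) = cls i.
Proof. exact: cls_eq (cls_Eqv i). Qed.

Lemma Rel_cls a b : Rel a b -> cls a = cls b.
Proof. by move=> H; apply: cls_eq; apply: rst_step. Qed.

Definition D := (I + (I * {ffun 'I_n -> I}))%type.

Definition dval (d : D) : L :=
  match d with inl b => e b | inr (_, ix) => p [ffun r => e (ix r)] end.
Definition dcls (d : D) : I := match d with inl b => cls b | inr (c, _) => c end.
Definition dwf (d : D) : Prop :=
  match d with inl _ => True
  | inr (c, ix) => V (p [ffun r => e (ix r)]) /\ forall r, cls (ix r) = c end.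
Definition isr (d : D) : bool := if d is inr _ then true else false.
Definition getl (d : D) : I := match d with inl b => b | inr (c, _) => c end.

Definition atom (c : I) (z : L) := exists d, dwf d /\ dcls d = c /\ z = dval d.
Definition anyatom (z : L) := exists c, atom c z.
Definition Jsp (c : I) := dspan (atom c).
Definition other (c : I) (z : L) := exists c', c' <> c /\ atom c' z.

Lemma dval_homog d : homogeneous grade (dval d).
Proof. case: d => [b|[c ix]] /=; [exact: e_homog | exact: prod_homog]. Qed.

Lemma app_map (dd : 'I_n -> D) :
  app p (map dval (map dd (enum 'I_n))) = p [ffun r => dval (dd r)].
Proof.
rewrite /app; congr p; apply/ffunP => r; rewrite !ffunE.
rewrite (nth_map (dd r)); last by rewrite size_map size_enum_ord.
by rewrite (nth_map r) ?size_enum_ord // nth_ord_enum.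
Qed.

Lemma nth_splice (T : Type) (x0 : T) (s : seq T) (i : nat) y r : (i < size s)%N ->
  nth x0 (take i s ++ y :: drop i.+1 s) r = if r == i then y else nth x0 s r.
Proof.
move=> Hi; rewrite nth_cat size_take Hi.
case: ltngtP => Hr.
- by rewrite nth_take.
- rewrite -(subnSK Hr) /= nth_drop; congr nth; rewrite addSn -addnS subnSK //.
  by rewrite subnKC // ltnW.
- by rewrite Hr subnn.
Qed.


Definition dsy (d0 : D) (ds : seq D) (k : nat) (s2 : 'S_m) : seq D :=
  [seq nth d0 (take k ds ++ drop k.+1 ds) (s2 r) | r <- enum 'I_m].

Lemma GE (ds : seq D) (k : nat) c (ix : {ffun 'I_n -> I}) d0 (Q : L -> Prop) :
  size ds = n -> (k < n)%N -> nth d0 ds k = inr (c, ix) -> subspace Q ->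
  (forall (i j : 'I_n) (s1 : 'S_n) (s2 : 'S_m),
     Q (app p (take i [seq e (ix (s1 r)) | r <- enum 'I_n] ++
        app p (map dval (take j (dsy d0 ds k s2) ++ inl (ix (s1 i)) :: drop j (dsy d0 ds k s2)))
        :: drop i.+1 [seq e (ix (s1 r)) | r <- enum 'I_n]))) ->
  Q (app p (map dval ds)).
Proof.
move=> Hsz kn Hk HQ Hterm.
case: HgLt => alpha Hid.
set ds' := take k ds ++ drop k.+1 ds.
have Hs' : size ds' = m by rewrite size_cat size_take size_drop Hsz kn subSS addnC subnK // -ltnS.
pose x := fun r : nat => e (ix (inord r)).
pose y := fun r : nat => nth 0 (map dval ds') r.
pose dx := fun r => epsilon (inhabits (0 : G)) (fun g => grade g (x r)).
pose dy := fun r => epsilon (inhabits (0 : G)) (fun g => grade g (y r)).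
have Hx : forall r, (r < n)%N -> grade (dx r) (x r).
  by move=> r _; apply: (epsilon_spec _ (fun g => grade g (x r))); apply: e_homog.
have Hy : forall r, (r < m)%N -> grade (dy r) (y r).
  move=> r rm; apply: (epsilon_spec _ (fun g => grade g (y r))); rewrite /y (nth_map d0) ?Hs' //; exact: dval_homog.
have := Hid (Ordinal kn) x y dx dy Hx Hy.
cbv zeta => H.
have E1 : take k (mkseq y m) ++ app p (mkseq x n) :: drop k (mkseq y m) = map dval ds.
  have -> : mkseq y m = map dval ds' by rewrite /y -Hs' -(size_map dval) mkseq_nth.
  have -> : app p (mkseq x n) = dval (inr (c, ix)).
    rewrite /app /=; congr p; apply/ffunP => r; rewrite !ffunE nth_mkseq //.
    by rewrite /x inord_val.
  rewrite -map_take -map_drop -map_cons -map_cat; congr map.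
  rewrite /ds' take_size_cat ?size_take ?Hsz ?kn // drop_size_cat ?size_take ?Hsz ?kn //.
  by rewrite -Hk -drop_nth ?Hsz // cat_take_drop.
rewrite -E1 H; apply: sub_big => // i _; apply: sub_big => // j _.
apply: sub_big => // s1 _; apply: sub_big => // s2 _; apply: subZ => //.
have Ex : [seq x (s1 r) | r <- enum 'I_n] = [seq e (ix (s1 r)) | r <- enum 'I_n].
  by apply: eq_map => r; rewrite /x inord_val.
have Ey : [seq y (s2 r) | r <- enum 'I_m] = map dval (dsy d0 ds k s2).
  rewrite /dsy -map_comp; apply: eq_map => r /=; rewrite /y (nth_map d0) // Hs'; exact: ltn_ord.
have Exi : nth 0 [seq x (s1 r) | r <- enum 'I_n] i = dval (inl (ix (s1 i))).
  by rewrite Ex (nth_map i) ?size_enum_ord // nth_ord_enum.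
rewrite Exi Ex Ey.
have -> : forall (X : seq D) a, take j (map dval X) ++ dval a :: drop j (map dval X) =
   map dval (take j X ++ a :: drop j X) by move=> X a; rewrite map_cat /= map_take map_drop.
exact: Hterm.
Qed.


Lemma dsy_perm d0 ds k s2 : size (take k ds ++ drop k.+1 ds) = m ->
  perm_eq (dsy d0 ds k s2) (take k ds ++ drop k.+1 ds).
Proof.
rewrite /dsy; set X := take k ds ++ drop k.+1 ds => HX.
have E : [seq nth d0 X (val r) | r <- enum 'I_m] = X.
  by rewrite (map_comp (nth d0 X) val) val_enum_ord -/(mkseq _ _) -HX mkseq_nth.
rewrite -{2}E.
have -> : [seq nth d0 X (s2 r) | r <- enum 'I_m] = [seq nth d0 X (val r) | r <- map s2 (enum 'I_m)].
  by elim: (enum _) => //= a l ->.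
apply: perm_map; apply: uniq_perm.
- by rewrite (map_inj_uniq (@perm_inj _ s2)) enum_uniq.
- exact: enum_uniq.
- move=> r; rewrite mem_enum; apply/mapP; exists (s2^-1 r)%g; first by rewrite mem_enum.
  by rewrite permKV.
Qed.

Lemma dcls_inl d : isr d = false -> dcls d = cls (getl d).
Proof. by case: d => [b|[c ix]]. Qed.

Lemma key_list N : forall ds : seq D, size ds = n -> (count isr ds <= N)%N ->
  (forall d, d \in ds -> dwf d) ->
  (exists d1 d2, d1 \in ds /\ d2 \in ds /\ dcls d1 <> dcls d2) ->
  app p (map dval ds) = 0.
Proof.
elim: N => [|N IH] ds Hsz Hcnt Hwf [d1 [d2 [H1 [H2 Hne]]]].
- have H0 : ~~ has isr ds by rewrite has_count -leqNgt.
  have Hinl : forall d, d \in ds -> isr d = false.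
    move=> d Hd; apply: negbTE; apply: contra H0 => Hr; apply/hasP; by exists d.
  case: (app p (map dval ds) =P 0) => // Hnz; exfalso.
  pose A := fun r : 'I_n => Some (getl (nth d1 ds r)).
  have Hin : prodsp p (fun r => u e V (A r)) 1%g (app p (map dval ds)).
    have -> : app p (map dval ds) = p [ffun r : 'I_n => [ffun q : 'I_n => e (getl (nth d1 ds q))] ((1%g : 'S_n) r)].
      rewrite /app; congr p; apply/ffunP => r; rewrite !ffunE perm1 (nth_map d1) ?Hsz //.
      have : nth d1 ds r \in ds by rewrite mem_nth ?Hsz.
      by move/Hinl; case: (nth d1 ds r).
    by apply: prodsp_gen => r; rewrite ffunE.
  have Hidx : forall d, d \in ds -> exists r : 'I_n, A r = Some (getl d).
    move=> d Hd; have Hi : (index d ds < size ds)%N by rewrite index_mem.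
    rewrite Hsz in Hi.
    by exists (Ordinal Hi); rewrite /A /= nth_index.
  have HR : Rel (getl d1) (getl d2).
    exists A, 1%g; split; first by exists (app p (map dval ds)).
    split; first exact: Hidx.
    by left; exact: Hidx.
  apply: Hne; rewrite !dcls_inl ?Hinl //; exact: Rel_cls HR.
- case: (leqP (count isr ds) N) => HcN; first by apply: IH => //; exists d1, d2.
  have Hhas : has isr ds by rewrite has_count (leq_ltn_trans _ HcN).
  set k := find isr ds.
  have kn : (k < n)%N by rewrite -Hsz -has_find.
  have Hk := nth_find d1 Hhas.
  case Ek : (nth d1 ds k) Hk => [b|[c ix]] // _.
  have Hkin : inr (c, ix) \in ds by rewrite -Ek mem_nth ?Hsz.
  have [Hv Hcl] : dwf (inr (c, ix)) := Hwf _ Hkin.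
  have [d' [Hd' Hd'c]] : exists d', d' \in ds /\ dcls d' <> c.
    case: (dcls d1 =P c) => [E|E]; last by exists d1.
    by exists d2; split => // E2; apply: Hne; rewrite E E2.
  set ds' := take k ds ++ drop k.+1 ds.
  have Hs' : size ds' = m by rewrite size_cat size_take size_drop Hsz kn subSS addnC subnK // -ltnS.
  have Hdecomp : ds = take k ds ++ inr (c, ix) :: drop k.+1 ds.
    by rewrite -Ek -drop_nth ?Hsz // cat_take_drop.
  have Hd'in : d' \in ds'.
    move: Hd'; rewrite {1}Hdecomp mem_cat inE /ds' mem_cat => /orP [->//|/orP [/eqP E|->]]; last by rewrite orbT.
    by exfalso; apply: Hd'c; rewrite E.
  have Hds'sub : forall d, d \in ds' -> d \in ds.
    move=> d Hd; rewrite Hdecomp mem_cat inE; move: Hd; rewrite /ds' mem_cat => /orP [->//|->]; by rewrite !orbT.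
  have Hcnt' : (count isr ds' <= N)%N.
    move: Hcnt; rewrite {1}Hdecomp /ds' !count_cat /=; lia.
  apply: (GE (d0 := d1) (k := k) (c := c) (ix := ix) (Q := fun z => z = 0)) => //; first exact: subspace_zero.
  move=> i j s1 s2.
  set X := dsy d1 ds k s2.
  have Hperm : perm_eq X ds' := dsy_perm d1 s2 Hs'.
  have HXs : size X = m by rewrite (perm_size Hperm).
  have Hinner : app p (map dval (take j X ++ inl (ix (s1 i)) :: drop j X)) = 0.
    apply: IH.
    - rewrite size_cat /= size_take size_drop HXs; have Hj' := ltn_ord j; case: (ltnP j m) => Hj; lia.
    - have /seq.permP Ec := Hperm; have E : count isr X = count isr ds' := Ec isr.
      have E2 : (count isr (take j X) + count isr (drop j X) = count isr X)%N by rewrite -count_cat cat_take_drop.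
      rewrite count_cat /=; move: Hcnt'; rewrite -/ds'; lia.
    - move=> d; rewrite mem_cat inE => /orP [/mem_take|/orP [/eqP ->//|/mem_drop]] Hd;
        apply: Hwf; apply: Hds'sub; by rewrite -(perm_mem Hperm).
    - exists (inl (ix (s1 i))), d'; split; first by rewrite mem_cat inE eqxx orbT.
      split.
        have : d' \in X by rewrite (perm_mem Hperm).
        rewrite -{1}(cat_take_drop j X) !mem_cat inE => /orP [->//|->]; by rewrite !orbT.
      by rewrite /= Hcl => E; apply: Hd'c.
  rewrite Hinner /app; apply: (p_zero Hml (r := i)); rewrite ffunE nth_splice ?eqxx //.
  by rewrite size_map size_enum_ord.
Qed.

Lemma key_fun (g : {ffun 'I_n -> L}) (cf : 'I_n -> I) :
  (forall r, atom (cf r) (g r)) -> (exists r1 r2, cf r1 <> cf r2) -> p g = 0.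
Proof.
move=> Ha [r1 [r2 Hne]].
have [dd Hdd] := fin_all_exists Ha.
have -> : g = [ffun r => dval (dd r)] by apply/ffunP => r; rewrite ffunE; case: (Hdd r) => _ [_ ->].
rewrite -app_map; apply: (key_list (N := n)).
- rewrite size_map; exact: size_enum_ord.
- apply: (leq_trans (count_size _ _)); rewrite size_map; move: (size_enum_ord n) => ->; exact: leqnn.
- by move=> d /mapP [r _ ->]; case: (Hdd r).
- exists (dd r1), (dd r2); rewrite !map_f ?mem_enum //; split=> //; split=> //.
  by case: (Hdd r1) => _ [-> _]; case: (Hdd r2) => _ [-> _].
Qed.


Lemma other_ord (i : 'I_n) : exists r : 'I_n, r != i.
Proof.
case: (i =P ord0) => [->|/eqP H]; last by exists ord0; rewrite eq_sym.
by exists ord_max; apply/eqP => /(congr1 val) /= h; move: m_gt0; rewrite h.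
Qed.

Lemma TG (A : 'I_n -> option I) (s : 'S_n) : (exists r, A r <> None) ->
  exists t, dsubset (prodsp p (fun r => u e V (A r)) s) (tprop t) /\
            (t = None -> forall r, A r <> None).
Proof.
move=> [r0 Hr0]; have [b0 Hb0] : exists b, A r0 = Some b by case: (A r0) Hr0 => // b; exists b.
case: (classic (forall r, A r <> None)) => Hall.
- pose ix r := odflt b0 (A r).
  have Hu : (fun r => u e V (A r)) = (fun r => fun z => z = e (ix r)).
    apply: functional_extensionality => r; rewrite /ix; case E: (A r) => [b|] //.
    by exfalso; exact: Hall r E.
  case: (qm1 (fun r => ix (s r))) => [[j Hj]|HV].
  + exists (Some j); split => //; rewrite Hu; apply: prodsp_sub; first exact: subspace_line.
    move=> x Hx; have -> : [ffun r => x (s r)] = [ffun r => e (ix (s r))] by apply/ffunP => r; rewrite !ffunE Hx.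
    exact: Hj.
  + exists None; split => //; rewrite Hu; apply: prodsp_sub; first exact: V_subspace.
    move=> x Hx; have -> : [ffun r => x (s r)] = [ffun r => e (ix (s r))] by apply/ffunP => r; rewrite !ffunE Hx.
    exact: HV.
- have [r1 Hr1] : exists r, A r = None.
    apply: NNPP => H; apply: Hall => r Hr; apply: H; by exists r.
  pose P := fun r : 'I_n => isSome (A r).
  pose lst := [seq r <- enum 'I_n | P r] ++ [seq r <- enum 'I_n | predC P r].
  pose k := size [seq r <- enum 'I_n | P r].
  have Hperm : perm_eq lst (enum 'I_n) by apply/permPl; exact: perm_filterC.
  have Hsz : size lst = n by rewrite (perm_size Hperm) size_enum_ord.
  have Huq : uniq lst by rewrite (perm_uniq Hperm) enum_uniq.
  have Hkn : (k + size [seq r <- enum 'I_n | predC P r] = n)%N by move: Hsz; rewrite size_cat.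
  pose t := fun r : 'I_n => nth r lst r.
  have tinj : injective t.
    move=> a b; rewrite /t [nth b lst b](set_nth_default a) ?Hsz // => /eqP.
    by rewrite nth_uniq ?Hsz // => /eqP; apply: val_inj.
  have Pt : forall r : 'I_n, P (t r) = (r < k)%N.
    move=> r; rewrite /t /lst nth_cat -/k; case: ifP => Hrk.
    - have : nth r [seq q <- enum 'I_n | P q] r \in [seq q <- enum 'I_n | P q] by rewrite mem_nth.
      by rewrite mem_filter => /andP [-> _].
    - have Hlt : (r - k < size [seq q <- enum 'I_n | predC P q])%N.
        have := ltn_ord r; move: Hrk Hkn; lia.
      have : nth r [seq q <- enum 'I_n | predC P q] (r - k) \in [seq q <- enum 'I_n | predC P q].
        by rewrite mem_nth.
      by rewrite mem_filter => /andP [/negbTE -> _].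
  pose tt := perm tinj.
  pose ix := fun r => odflt b0 (A (tt r)).
  have Hu : (fun r => u e V (A (tt r))) =
            (fun r : 'I_n => if (r < k)%N then (fun z => z = e (ix r)) else V).
    apply: functional_extensionality => r; rewrite /ix -Pt /P permE; by case: (A (t r)).
  have Hk : (0 < k < n)%N.
    have H1 : (0 < k)%N.
      rewrite /k size_filter -has_count; apply/hasP; exists r0; first by rewrite mem_enum.
      by rewrite /P Hb0.
    have H2 : (0 < size [seq q <- enum 'I_n | predC P q])%N.
      rewrite size_filter -has_count; apply/hasP; exists r1; first by rewrite mem_enum.
      by rewrite /= /P Hr1.
    apply/andP; split => //; move: Hkn H2; lia.
  have [j Hj] := qm2 ix (s * tt^-1)%g Hk.
  exists (Some j); split => // z Hz; apply: Hj; rewrite -Hu.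
  by apply/(prodsp_reindex p (fun r => u e V (A r)) s tt z).1.
Qed.


Lemma subspace_Jsp c : subspace (Jsp c).
Proof. exact: subspace_span. Qed.

Definition Ad (d0 : D) (ds : seq D) (r : 'I_n) : option I :=
  match nth d0 ds r with inl b => Some b | inr _ => None end.

Lemma LP d0 ds : size ds = n -> (forall d, d \in ds -> dwf d) ->
  prodsp p (fun r => u e V (Ad d0 ds r)) 1%g (app p (map dval ds)).
Proof.
move=> Hsz Hwf.
have -> : app p (map dval ds) = p [ffun r : 'I_n => [ffun q : 'I_n => dval (nth d0 ds q)] ((1%g : 'S_n) r)].
  by rewrite /app; congr p; apply/ffunP => r; rewrite !ffunE perm1 (nth_map d0) ?Hsz.
apply: prodsp_gen => r; rewrite ffunE /Ad.
have : nth d0 ds r \in ds by rewrite mem_nth ?Hsz.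
move/Hwf; case: (nth d0 ds r) => [b|[c ix]] //= [HV _]; exact: HV.
Qed.

Lemma AC12 c ds : size ds = n -> (forall d, d \in ds -> dwf d /\ dcls d = c) ->
  has (fun d => ~~ isr d) ds -> Jsp c (app p (map dval ds)).
Proof.
move=> Hsz Hds /hasP [d0 Hd0 Hl].
case: d0 Hd0 Hl => [b0|//] Hb0 _.
have Hwf : forall d, d \in ds -> dwf d by move=> d /Hds [].
have Hin := LP (inl b0) Hsz Hwf.
have Hex : exists r, Ad (inl b0) ds r = Some b0.
  have Hi : (index (inl b0) ds < size ds)%N by rewrite index_mem.
  rewrite Hsz in Hi; exists (Ordinal Hi); by rewrite /Ad /= nth_index.
have [t [Hsub Hnone]] : exists t, dsubset (prodsp p (fun r => u e V (Ad (inl b0) ds r)) 1%g) (tprop t) /\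
            (t = None -> forall r, Ad (inl b0) ds r <> None).
  by apply: TG; case: Hex => r Hr; exists r; rewrite Hr.
case: (app p (map dval ds) =P 0) => [->|Hnz]; first exact: span0.
have Hcb : cls b0 = c by case: (Hds _ Hb0).
case: t Hsub Hnone => [j|] Hsub Hnone.
- have Hl := Hsub _ Hin.
  have [d [_ ->]] := line_nz Hl (introN eqP Hnz).
  have HR : Rel b0 j.
    exists (Ad (inl b0) ds), 1%g; split; first by exists (app p (map dval ds)).
    by split=> //; right.
  apply: spanZ; apply: spanS; exists (inl j); split=> //; split=> //=.
  by rewrite -(Rel_cls HR).
- have HV := Hsub _ Hin.
  have Hall := Hnone erefl.
  have Hgl : forall r : 'I_n, nth (inl b0) ds r = inl (getl (nth (inl b0) ds r)).
    move=> r; have := Hall r; rewrite /Ad; by case: (nth (inl b0) ds r).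
  pose ix := [ffun r : 'I_n => getl (nth (inl b0) ds r)].
  have Happ : app p (map dval ds) = p [ffun r => e (ix r)].
    rewrite /app; congr p; apply/ffunP => r; rewrite !ffunE (nth_map (inl b0)) ?Hsz //.
    by rewrite {1}Hgl.
  apply: spanS; exists (inr (c, ix)); split; last by split.
  split; first by rewrite -Happ.
  move=> r; rewrite ffunE.
  have : nth (inl b0) ds r \in ds by rewrite mem_nth ?Hsz.
  by move/Hds => [_]; rewrite Hgl.
Qed.

Lemma AC12F c (g : {ffun 'I_n -> L}) : (forall r, atom c (g r)) ->
  (exists r b, g r = e b /\ cls b = c) -> Jsp c (p g).
Proof.
move=> Ha [r0 [b [Hr0 Hb]]].
have [dd Hdd] := fin_all_exists Ha.
pose dd' := fun r => if r == r0 then inl b else dd r.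
have -> : g = [ffun r => dval (dd' r)].
  apply/ffunP => r; rewrite ffunE /dd'; case: eqP => [->|_] //; by case: (Hdd r) => _ [_ ->].
rewrite -app_map; apply: AC12.
- rewrite size_map; exact: size_enum_ord.
- move=> d /mapP [r _ ->]; rewrite /dd'; case: eqP => _ //; by case: (Hdd r) => ? [? _].
- apply/hasP; exists (dd' r0); first by rewrite map_f ?mem_enum.
  by rewrite /dd' eqxx.
Qed.

Lemma ACF c (g : {ffun 'I_n -> L}) : (forall r, atom c (g r)) -> Jsp c (p g).
Proof.
move=> Ha.
have [dd Hdd] : exists dd : 'I_n -> D, forall r, dwf (dd r) /\ dcls (dd r) = c /\ g r = dval (dd r) := fin_all_exists Ha.
case: (classic (exists r b, dd r = inl b)) => [[r [b Hr]]|Hno].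
  apply: AC12F => //; exists r, b; case: (Hdd r) => _; rewrite Hr /= => [[Hc ->]]; by split.
have Hg : g = [ffun r => dval (dd r)] by apply/ffunP => r; rewrite ffunE; case: (Hdd r) => _ [_ ->].
rewrite Hg -app_map.
set ds := map dd (enum 'I_n).
have Hsz : size ds = n by rewrite size_map; exact: size_enum_ord.
have Hds : forall d, d \in ds -> dwf d /\ dcls d = c.
  by move=> d /mapP [r _ ->]; case: (Hdd r) => ? [? _].
have Hk : nth (dd ord0) ds 0 = dd ord0.
  by rewrite /ds (nth_map ord0) ?size_enum_ord // (nth_ord_enum ord0 ord0).
case E0 : (dd ord0) Hk => [b|[c0 ix]] Hk; first by exfalso; apply: Hno; exists ord0, b.
have Hd0 : dd ord0 \in ds by rewrite map_f ?mem_enum.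
have [Hw Hc0] := Hds _ Hd0; rewrite E0 /= in Hw Hc0; case: Hw => HV Hcl.
apply: (GE (d0 := dd ord0) (k := 0) (c := c0) (ix := ix) (Q := Jsp c)) => //; first by rewrite E0.
  exact: subspace_Jsp.
move=> i j s1 s2.
set X := dsy (dd ord0) ds 0 s2.
have Hs' : size (take 0 ds ++ drop 1 ds) = m by rewrite size_cat size_take size_drop Hsz /=; lia.
have Hperm : perm_eq X (take 0 ds ++ drop 1 ds) := dsy_perm (dd ord0) s2 Hs'.
have HXs : size X = m by rewrite (perm_size Hperm).
have HXd : forall d, d \in X -> d \in ds.
  by move=> d; rewrite (perm_mem Hperm) mem_cat => /orP [/mem_take|/mem_drop].
have Hinner : Jsp c (app p (map dval (take j X ++ inl (ix (s1 i)) :: drop j X))).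
  apply: AC12.
  - rewrite size_cat /= size_take size_drop HXs; have Hj' := ltn_ord j; case: (ltnP j m) => Hj; lia.
  - move=> d; rewrite mem_cat inE => /orP [/mem_take Hd|/orP [/eqP ->|/mem_drop Hd]].
    + by apply: Hds; apply: HXd.
    + by rewrite /= Hcl Hc0.
    + by apply: Hds; apply: HXd.
  - by apply/hasP; exists (inl (ix (s1 i))); rewrite ?mem_cat ?inE ?eqxx ?orbT.
rewrite {1}/app; set f := [ffun r => _].
have Hxs : forall r : 'I_n, nth 0 [seq e (ix (s1 q)) | q <- enum 'I_n] r = e (ix (s1 r)).
  by move=> r; rewrite (nth_map r) ?size_enum_ord // nth_ord_enum.
have Hf : forall r, f r = if r == i then app p (map dval (take j X ++ inl (ix (s1 i)) :: drop j X))
                          else e (ix (s1 r)).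
  move=> r; rewrite /f ffunE nth_splice; last by rewrite size_map size_enum_ord.
  case: (r =P i) => [->|/eqP Hne]; first by rewrite !eqxx.
  have Hne' : (nat_of_ord r == nat_of_ord i) = false by apply/negbTE.
  by rewrite Hne' Hxs.
apply: (p_expand1 Hml (r0 := i) (At := atom c)); first exact: subspace_Jsp.
  by rewrite Hf eqxx.
move=> a Ha'; apply: AC12F.
- move=> r; rewrite ffunE; case: (r =P i) => [_|/eqP Hne]; first exact: Ha'.
  rewrite Hf (negbTE Hne).
  by exists (inl (ix (s1 r))); rewrite /= Hcl Hc0; split.
- have [r' Hr'] := other_ord i; exists r', (ix (s1 r')); rewrite ffunE (negbTE Hr') Hf (negbTE Hr').
  by rewrite Hcl Hc0.
Qed.


Lemma atom_e b : atom (cls b) (e b).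
Proof. by exists (inl b). Qed.

Lemma co_occ (ix : 'I_n -> I) : p [ffun r => e (ix r)] != 0 -> forall r r', cls (ix r) = cls (ix r').
Proof.
move=> Hnz r r'; apply: Rel_cls.
exists (fun q => Some (ix q)), 1%g; split.
  exists (p [ffun r => e (ix r)]); split; last by apply/eqP.
  have -> : p [ffun r => e (ix r)] = p [ffun r : 'I_n => [ffun q : 'I_n => e (ix q)] ((1%g : 'S_n) r)].
    by congr p; apply/ffunP => q; rewrite !ffunE perm1.
  by apply: prodsp_gen => q; rewrite ffunE.
by split; [exists r | left; exists r'].
Qed.

Lemma vgen_atom (ix : 'I_n -> I) : V (p [ffun r => e (ix r)]) -> p [ffun r => e (ix r)] != 0 ->
  atom (cls (ix ord0)) (p [ffun r => e (ix r)]).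
Proof.
move=> HV Hnz; exists (inr (cls (ix ord0), [ffun r => ix r])); split; last split => //.
  split; last by move=> r; rewrite ffunE; apply: co_occ.
  by have -> : [ffun r => e ([ffun r0 => ix r0] r)] = [ffun r => e (ix r)] by apply/ffunP => r; rewrite !ffunE.
by rewrite /=; congr p; apply/ffunP => r; rewrite !ffunE.
Qed.

Lemma ocons_seq (ix : nat -> I) (r : 'I_n) :
  ocons (Some (ix 0%N)) (fun q => Some (ix q.+1)) r = Some (ix r).
Proof. by case: r => [[|q] Hq]. Qed.

Lemma V_span y : V y -> dspan (fun z => V z /\ anyatom z) y.
Proof.
case: Htight => [H0|Hsp] Hy.
  by rewrite ((H0 y).1 Hy); exact: span0.
have := (Hsp y).1 Hy; apply: span_sub; first exact: subspace_span.
move=> z [ix [_ [Hmu' ->]]].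
case: (p [ffun r : 'I_n => e (ix r)] =P 0) => [->|/eqP Hnz]; first exact: span0.
have HV : V (p [ffun r : 'I_n => e (ix r)]).
  case: (qm1 (fun r => ix r)) => // [[j Hj]].
  have : Some j = None.
    apply/(Hmu' (Some j)); exists 1%g; split.
      exists (p [ffun r : 'I_n => e (ix r)]); split; last by apply/eqP.
      have -> : p [ffun r : 'I_n => e (ix r)] = p [ffun r : 'I_n => [ffun q : 'I_n => e (ix q)] ((1%g : 'S_n) r)].
        by congr p; apply/ffunP => q; rewrite !ffunE perm1.
      by apply: prodsp_gen => q; rewrite ffunE ocons_seq.
    split=> //; apply: prodsp_sub; first exact: subspace_line.
    move=> x Hx; have -> : [ffun r => x ((1%g : 'S_n) r)] = [ffun r : 'I_n => e (ix r)].
      by apply/ffunP => q; rewrite !ffunE perm1; have := Hx q; rewrite ocons_seq.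
    exact: Hj.
  by [].
apply: spanS; split => //; eexists; exact: (vgen_atom HV Hnz).
Qed.

Lemma L_span x : dspan anyatom x.
Proof.
have [v [w [Hv [Hw ->]]]] := decompL x; apply: spanD.
  by apply: (span_mono _ (V_span Hv)) => z [_ H].
by apply: (span_mono _ Hw) => z [i [_ ->]]; exists (cls i); exact: atom_e.
Qed.

Lemma choose_cls (g : {ffun 'I_n -> L}) rho c : atom c (g rho) -> (forall r, anyatom (g r)) ->
  exists cf : 'I_n -> I, (forall r, atom (cf r) (g r)) /\ cf rho = c.
Proof.
move=> Hrho Hall.
have H : forall r, exists c', atom c' (g r) /\ (r = rho -> c' = c).
  move=> r; case: (r =P rho) => [->|Hne]; first by exists c.
  by have [c' Hc'] := Hall r; exists c'.
have [cf Hcf] := fin_all_exists H.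
by exists cf; split => [r|]; [case: (Hcf r) | case: (Hcf rho) => _ ->].
Qed.

Lemma one_slot (Q : L -> Prop) c (Arho : L -> Prop) (f : {ffun 'I_n -> L}) rho :
  subspace Q -> dsubset Arho (atom c) -> dspan Arho (f rho) ->
  (forall g : {ffun 'I_n -> L}, Arho (g rho) -> (forall r, atom c (g r)) -> Q (p g)) -> Q (p f).
Proof.
move=> HQ HA Hf Hg.
apply: (p_expand Hml (At := fun r => if r == rho then Arho else anyatom)) => //.
  by move=> r; case: eqP => [->//|_]; exact: L_span.
move=> g Hg'.
have Hgrho : Arho (g rho) by have := Hg' rho; rewrite eqxx.
case: (classic (forall r, atom c (g r))) => [Hall|Hnot]; first exact: Hg.
have [r1 Hr1] : exists r, ~ atom c (g r).
  by apply: NNPP => H; apply: Hnot => r; apply: NNPP => H'; apply: H; exists r.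
have Hany : forall r, anyatom (g r).
  move=> r; have := Hg' r; case: eqP => [->|_] // /HA H; by exists c.
have [cf [Hcf Hcr]] := choose_cls (HA _ Hgrho) Hany.
rewrite (key_fun Hcf); first exact: sub0.
exists r1, rho; rewrite Hcr => E; apply: Hr1; rewrite -E; exact: Hcf.
Qed.

Lemma Dir c z : Jsp c z -> dspan (other c) z -> z = 0.
Proof.
move=> Hz1 Hz2; apply: Hcen => s; apply: prodsp_sub; first exact: subspace_zero.
move=> x Hx; set f := [ffun r => x (s r)].
pose rho := (s^-1 ord0)%g.
have Hfrho : f rho = z.
  rewrite /f ffunE /rho permKV; exact: (Hx ord0).
apply: (p_expand Hml (Q := fun y => y = 0) (f := f) (At := fun r => if r == rho then (fun y => y = z) else anyatom)).
- exact: subspace_zero.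
- move=> r; case: eqP => [->|_]; [by apply: spanS | exact: L_span].
move=> g Hg.
have Hgrho : g rho = z by have := Hg rho; rewrite eqxx.
have Hany : forall r, r != rho -> anyatom (g r) by move=> r /negbTE Hr; have := Hg r; rewrite Hr.
have [r' Hr'] := other_ord rho.
case: (classic (forall r, r != rho -> atom c (g r))) => [Hall|Hnot].
- rewrite -(upd_id g rho) Hgrho.
  have H : forall a, dspan (other c) a -> p (upd g rho a) = 0.
    move=> a; elim => [|y [c' [Hc' Hy]]|a0 y1 y2 _ H1 _ H2].
    + by apply: (p_zero Hml (r := rho)); rewrite ffunE eqxx.
    + apply: (key_fun (cf := fun r => if r == rho then c' else c)).
        move=> r; rewrite ffunE; case: eqP => [_|/eqP Hr] //; exact: Hall.
      by exists rho, r'; rewrite eqxx (negbTE Hr').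
    + by rewrite Hml H1 H2 scaler0 addr0.
  exact: H.
- have [r1 [Hr1 Hr1']] : exists r, r != rho /\ ~ atom c (g r).
    apply: NNPP => H; apply: Hnot => r Hr; apply: NNPP => H'; apply: H; by exists r.
  rewrite -(upd_id g rho) Hgrho.
  have H : forall a, dspan (atom c) a -> p (upd g rho a) = 0.
    move=> a; elim => [|y Hy|a0 y1 y2 _ H1 _ H2].
    + by apply: (p_zero Hml (r := rho)); rewrite ffunE eqxx.
    + have Hany' : forall r, anyatom (upd g rho y r).
        move=> r; rewrite ffunE; case: eqP => [_|/eqP Hr]; [by exists c | exact: Hany].
      have Hy' : atom c (upd g rho y rho) by rewrite ffunE eqxx.
      have [cf [Hcf Hcr]] := choose_cls Hy' Hany'.
      rewrite (key_fun Hcf) //.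
      exists r1, rho; rewrite Hcr => E; apply: Hr1'; have := Hcf r1; rewrite ffunE (negbTE Hr1) E //.
    + by rewrite Hml H1 H2 scaler0 addr0.
  exact: H.
Qed.


Definition Is (c : I) : I -> Prop := fun i => cls i = c.
Definition Vs (c : I) : L -> Prop := dspan (fun z => exists ix : {ffun 'I_n -> I},
   (forall r, cls (ix r) = c) /\ V z /\ z = p [ffun r => e (ix r)]).
Definition Js (c : I) : L -> Prop := fun x => exists v w, Vs c v /\ Wsp e (Is c) w /\ x = v + w.

Lemma subspace_Js c : subspace (Js c).
Proof. apply: subspace_sum; exact: subspace_span. Qed.

Lemma Vs_V c : dsubset (Vs c) V.
Proof. apply: span_sub; first exact: V_subspace. by move=> z [ix [_ [HV _]]]. Qed.

Lemma Vs_Jsp c : dsubset (Vs c) (Jsp c).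
Proof.
apply: span_mono => z [ix [Hcl [HV Ez]]]; subst z; exists (inr (c, ix)); split; first by split. by split.
Qed.

Lemma Js_Jsp c x : Js c x <-> Jsp c x.
Proof.
split.
- move=> [v [w [Hv [Hw ->]]]]; apply: spanD; first exact: Vs_Jsp.
  by apply: (span_mono _ Hw) => z [i [Hi ->]]; rewrite -Hi; exact: atom_e.
- apply: span_sub; first exact: subspace_Js.
  move=> y [[b|[c' ix]] [Hwf [Hc ->]]] /=.
  + exists 0, (e b); split; first exact: span0.
    by split; [apply: spanS; exists b | rewrite add0r].
  + case: Hwf => HV Hcl; rewrite /= in Hc; subst c'.
    exists (p [ffun r => e (ix r)]), 0; split; first by apply: spanS; exists ix.
    by split; [exact: span0 | rewrite addr0].
Qed.

Lemma atomV_Vs c y : atom c y -> V y -> Vs c y.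
Proof.
move=> [[b|[c' ix]] [Hwf [Hc ->]]] /= HV; first by exfalso; exact: e_notV HV.
case: Hwf => _ Hcl; rewrite /= in Hc; subst c'; apply: spanS; by exists ix.
Qed.

Lemma ideal_sub (S T : L -> Prop) : ideal grade p S T -> subspace T.
Proof. by case=> [[]]. Qed.

Lemma ideal_at (S T : L -> Prop) (g : {ffun 'I_n -> L}) rho :
  ideal grade p S T -> T (g rho) -> (forall r, S (g r)) -> T (p g).
Proof.
move=> [_ [_ Hid]] Hrho HS.
pose s := tperm ord0 rho.
have -> : p g = p [ffun r => [ffun q => g (s q)] (s r)].
  by congr p; apply/ffunP => r; rewrite !ffunE tpermK.
apply: (Hid s); apply: prodsp_gen => r; rewrite ffunE.
case: (r =P ord0) => [->|Hr] /=; first by rewrite tpermL.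
have -> : (nat_of_ord r == 0%N) = false by apply/negbTE; apply/eqP => h; apply: Hr; apply: val_inj.
exact: HS.
Qed.

Lemma star (T : L -> Prop) c a (A : 'I_n -> option I) r0 (s : 'S_n) :
  ideal grade p (Js c) T -> A r0 = Some a -> cls a = c -> T (e a) ->
  dsubset (prodsp p (fun r => u e V (A r)) s) T.
Proof.
move=> Tid HA Ha HTa; apply: prodsp_sub; first exact: ideal_sub Tid.
move=> x Hx; pose rho := (s^-1 r0)%g.
have Hf : [ffun r => x (s r)] rho = e a by rewrite ffunE /rho permKV; have := Hx r0; rewrite HA.
apply: (one_slot (c := c) (Arho := fun y => y = e a) (rho := rho)).
- exact: ideal_sub Tid.
- by move=> y ->; rewrite -Ha; exact: atom_e.
- by rewrite Hf; apply: spanS.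
move=> g Hg Hall; apply: (ideal_at (rho := rho) Tid); first by rewrite Hg.
by move=> r; apply/Js_Jsp; apply: spanS.
Qed.

Definition asetL (S : L -> Prop) (t : option I) := nonzero S /\ dsubset S (tprop t).

Lemma amap_iff (s : 'S_n) (js : nat -> option I) t :
  a_map p e V (fun _ => True) s js t <-> asetL (prodsp p (fun r => u e V (js r)) s) t.
Proof. by case: t => [j|] /=; split => [[H1 H2]|[H1 H2]]; split => //; case: H2. Qed.

Lemma asetL_eq S1 S2 t : eqset S1 S2 -> asetL S1 t -> asetL S2 t.
Proof.
move=> E [[y [Hy Hnz]] Hs]; split; first by exists y; split => //; apply/E.
by move=> z /E; apply: Hs.
Qed.

Lemma asetL_uniq S t1 t2 : asetL S t1 -> asetL S t2 -> t1 = t2.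
Proof. move=> [[y [Hy Hnz]] H1] [_ H2]; apply: (UQ (y := y)); [exact/eqP | exact: H1 | exact: H2]. Qed.

Lemma MQ (A : 'I_n -> option I) (s : 'S_n) rb b t : A rb = Some b ->
  asetL (prodsp p (fun r => u e V (A r)) s) t ->
  exists (B : 'I_n -> option I) (s' : 'S_n), B ord0 = t /\
    (forall r, r != ord0 -> B r = A (tperm ord0 rb r)) /\
    prodsp p (fun r => u e V (B r)) s' (e b).
Proof.
move=> HAb Hset.
pose tau := tperm ord0 rb.
pose Bf := fun r => A (tau r).
pose js := fun q : nat => if insub q.+1 is Some o then Bf o else None.
have Hocons : forall x (r : 'I_n), ocons x js r = if r == ord0 then x else Bf r.
  move=> x [[|q] Hq] //=; rewrite /js; case: insubP => [o _ Ho|]; last by rewrite Hq.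
  by congr Bf; apply: val_inj.
have Hu : (fun r : 'I_n => u e V (ocons (Some b) js r)) = (fun r : 'I_n => u e V (Bf r)).
  apply: functional_extensionality => r; rewrite Hocons; case: eqP => [->|//].
  by rewrite /Bf /tau tpermL HAb.
have Hinj : inJ (fun _ => True) t by case: t {Hset}.
have Hinjs : forall r, (r < n.-1)%N -> inJ (fun _ => True) (js r) by move=> r _; case: (js r).
have := @Hmu false t true js b Hinj Hinjs Logic.I.
case.
  exists (s * tau^-1)%g; split => // t'; rewrite amap_iff Hu; split.
  - move=> H; apply: (asetL_uniq H); apply: asetL_eq Hset.
    exact: prodsp_reindex.
  - move=> ->; apply: asetL_eq Hset; exact: prodsp_reindex.
move=> s' Hs'; exists (fun r => ocons t js r), s'; split => //; split => // r Hr.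
by rewrite Hocons (negbTE Hr).
Qed.


Lemma step_target (T : L -> Prop) c a (A : 'I_n -> option I) (s : 'S_n) r0 b :
  ideal grade p (Js c) T -> A r0 = Some a -> cls a = c -> T (e a) ->
  nonzero (prodsp p (fun r => u e V (A r)) s) ->
  dsubset (prodsp p (fun r => u e V (A r)) s) (line (e b)) -> T (e b).
Proof.
move=> Tid HA Ha HTa [y [Hy Hnz]] Hl.
have Hst := star (s := s) Tid HA Ha HTa.
apply: (line_inv (ideal_sub Tid) (Hst _ Hy) (Hl _ Hy)); exact/eqP.
Qed.

Lemma tperm_ne0 (rb ra : 'I_n) : ra != rb -> tperm ord0 rb ra != ord0.
Proof.
move=> Hne; apply: contra Hne => /eqP H.
by have := congr1 (tperm ord0 rb) H; rewrite tpermK tpermL => ->.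
Qed.

Lemma step_mq (T : L -> Prop) c a b (A : 'I_n -> option I) (s : 'S_n) rb :
  ideal grade p (Js c) T -> cls a = c -> T (e a) -> A rb = Some b ->
  nonzero (prodsp p (fun r => u e V (A r)) s) ->
  ((exists ra, ra != rb /\ A ra = Some a) \/ dsubset (prodsp p (fun r => u e V (A r)) s) (line (e a))) ->
  T (e b).
Proof.
move=> Tid Ha HTa HAb Hnz H.
have [t [Hset Ht]] : exists t, asetL (prodsp p (fun r => u e V (A r)) s) t /\
     (t = Some a \/ exists ra, ra != rb /\ A ra = Some a).
  case: H => [Hra|Hl]; last by exists (Some a); split => //; left.
  have Hex : exists r, A r <> None by exists rb; rewrite HAb.
  have [t [Hsub _]] := TG s Hex.
  by exists t; split => //; right.
have [B [s' [HB0 [HBr He]]]] := MQ HAb Hset.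
case: Ht => [Eta|[ra [Hra HAa]]].
- apply: (star (A := B) (r0 := ord0) (s := s') Tid _ Ha HTa He); by rewrite HB0 Eta.
- apply: (star (A := B) (r0 := tperm ord0 rb ra) (s := s') Tid _ Ha HTa He).
  by rewrite HBr ?tpermK // tperm_ne0.
Qed.

Lemma chain (T : L -> Prop) c : ideal grade p (Js c) T ->
  forall x y, Eqv x y -> cls x = c -> (T (e x) <-> T (e y)).
Proof.
move=> Tid x y; elim => {x y} [x y HR|x|x y Hxy IH|x y z Hxy IH1 Hyz IH2] Hx.
- have Hy : cls y = c by rewrite -(Rel_cls HR).
  case: HR => A [s [Hnz [[r1 Hr1] Hb]]].
  split => HT.
  + case: Hb => [[r2 Hr2]|Hl].
    * case: (r1 =P r2) => [E|/eqP Hne].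
        by subst r2; rewrite Hr1 in Hr2; case: Hr2 => <-.
      apply: (step_mq (a := x) (rb := r2) Tid Hx HT Hr2 Hnz); left; by exists r1.
    * exact: (step_target Tid Hr1 Hx HT Hnz Hl).
  + case: Hb => [[r2 Hr2]|Hl].
    * case: (r1 =P r2) => [E|/eqP Hne].
        by subst r2; rewrite Hr1 in Hr2; case: Hr2 => ->.
      apply: (step_mq (a := y) (rb := r1) Tid Hy HT Hr1 Hnz); left; exists r2; split => //.
      by rewrite eq_sym.
    * exact: (step_mq (a := y) (rb := r1) Tid Hy HT Hr1 Hnz (or_intror Hl)).
- by [].
- have Hx' : cls x = c by rewrite (cls_eq Hxy).
  by apply: iff_sym; apply: IH.
- have Hy : cls y = c by rewrite -(cls_eq Hxy).
  exact: iff_trans (IH1 Hx) (IH2 Hy).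
Qed.

Lemma minimal c : minimal_alg grade p e (Js c) (Vs c) (Is c).
Proof.
move=> T VT JT Tid [HVT [_ [HJT [_ [Hnz [_ HTiff]]]]]] _.
have [i0 Hi0] : exists i, JT i.
  apply: NNPP => H; case: Hnz => x [Hx Hx0]; apply: Hx0.
  move: x Hx; apply: span_sub; first exact: subspace_zero.
  move=> z [i [Hi _]]; exfalso; apply: H; by exists i.
have HTi0 : T (e i0).
  apply/HTiff; exists 0, (e i0); split; first exact: (sub0 HVT.1).
  by split; [apply: spanS; exists i0 | rewrite add0r].
have Hci0 : cls i0 = c := HJT i0 Hi0.
have HTb : forall b, cls b = c -> T (e b).
  move=> b Hb; have HE : Eqv b i0 by apply: Eqv_of_cls; rewrite Hb Hci0.
  by apply/(chain Tid HE Hb).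
move=> x; split; first by case: Tid => _ [H _]; apply: H.
move/Js_Jsp; apply: span_sub; first exact: ideal_sub Tid.
move=> y [[b|[c' ix]] [Hwf [Hc ->]]] /=.
- exact: HTb.
- case: Hwf => HV Hcl; rewrite /= in Hc; subst c'.
  have -> : p [ffun r => e (ix r)] = p [ffun r => e (ix r)] by [].
  apply: (ideal_at (rho := ord0) Tid); first by rewrite ffunE; apply: HTb.
  move=> r; rewrite ffunE; apply/Js_Jsp; apply: spanS; rewrite -(Hcl r); exact: atom_e.
Qed.


Lemma LIFT c (js0 : nat -> option I) i (s : 'S_n) t : js0 0%N = Some i ->
  a_map p e (Vs c) (Is c) s js0 t ->
  forall t', a_map p e V (fun _ => True) s js0 t' <-> t' = t.
Proof.
move=> H0 Hsub t'; rewrite amap_iff.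
set SL := prodsp p (fun r => u e V (js0 r)) s.
set Ss := prodsp p (fun r => u e (Vs c) (js0 r)) s.
have Hinc : dsubset Ss SL.
  by apply: prodsp_mono => r z; case: (js0 r) => [x|] //=; apply: Vs_V.
have [y [Hy Hnz] Hty] : exists2 y, (Ss y /\ y <> 0) & tprop t y.
  case: Hsub => [[y [Hy Hnz]] Ht]; exists y => //.
  by case: t Ht => [j [_ Hl]|Hv] /=; [exact: Hl | exact: Vs_V (Hv _ Hy)].
have Hex : exists r : 'I_n, js0 r <> None by exists ord0; rewrite /= H0.
have [t0 [Ht0 _]] := TG s Hex.
have Hy' : y != 0 by apply/eqP.
split => [[_ Hsub']|->].
- exact: (UQ Hy' (Hsub' _ (Hinc _ Hy)) Hty).
- have E0 : t0 = t := UQ Hy' (Ht0 _ (Hinc _ Hy)) Hty.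
  split; first by exists y; split => //; exact: Hinc.
  by rewrite -E0.
Qed.

Lemma DEC c (A : 'I_n -> option I) (s : 'S_n) i : (forall r x, A r = Some x -> cls x = c) -> cls i = c ->
  prodsp p (fun r => u e V (A r)) s (e i) -> prodsp p (fun r => u e (Vs c) (A r)) s (e i).
Proof.
move=> HA Hi Hin.
set S1 := prodsp p (fun r => u e (Vs c) (A r)) s.
have HS1 : dsubset S1 (Jsp c).
  apply: prodsp_sub; first exact: subspace_Jsp.
  move=> x Hx; apply: (p_expand Hml (At := fun _ => atom c)); first exact: subspace_Jsp.
  - move=> r; rewrite ffunE; have := Hx (s r); case E: (A (s r)) => [b|] /= Hb.
      by rewrite Hb; apply: spanS; rewrite -(HA _ _ E); exact: atom_e.
    exact: Vs_Jsp.
  - move=> g Hg; exact: ACF.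
have Hdec : forall y, prodsp p (fun r => u e V (A r)) s y ->
    exists y1 y2, S1 y1 /\ dspan (other c) y2 /\ y = y1 + y2.
  apply: prodsp_sub; first by apply: subspace_sum; [exact: subspace_prodsp | exact: subspace_span].
  move=> x Hx.
  apply: (p_expand Hml (Q := fun y => exists y1 y2, S1 y1 /\ dspan (other c) y2 /\ y = y1 + y2)
     (f := [ffun r => x (s r)]) (At := fun r => match A (s r) with Some b => (fun z => z = e b)
                                        | None => (fun z => V z /\ anyatom z) end)).
  - apply: subspace_sum; [exact: subspace_prodsp | exact: subspace_span].
  - move=> r; rewrite ffunE; have := Hx (s r); case: (A (s r)) => [b|] /= Hb; [by apply: spanS | exact: V_span].
  - move=> g Hg.
    have Hany : forall r, anyatom (g r).
      move=> r; have := Hg r; case: (A (s r)) => [b|] /=; last by case.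
      by move=> ->; exists (cls b); exact: atom_e.
    case: (classic (forall r, atom c (g r))) => [Hall|Hnot].
    + exists (p g), 0; split; last by split; [exact: span0 | rewrite addr0].
      have -> : p g = p [ffun r => [ffun q => g (s^-1 q)%g] (s r)].
        by congr p; apply/ffunP => r; rewrite !ffunE permK.
      apply: prodsp_gen => q; rewrite ffunE; have := Hg (s^-1 q)%g; rewrite permKV.
      case: (A q) => [b|] //= [HV _]; exact: atomV_Vs (Hall _) HV.
    + have [r1 Hr1] : exists r, ~ atom c (g r).
        by apply: NNPP => H; apply: Hnot => r; apply: NNPP => H'; apply: H; exists r.
      have [cf Hcf] := fin_all_exists Hany.
      case: (classic (exists r r', cf r <> cf r')) => [Hmix|Hsame].
      * exists 0, 0; rewrite (key_fun Hcf Hmix) addr0.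
        by split; [exact: span0 | split; [exact: span0 | by []]].
      * have Hall' : forall r, atom (cf r1) (g r).
          move=> r; have E : cf r = cf r1 by apply: NNPP => H; apply: Hsame; exists r, r1.
          by rewrite -E; exact: Hcf.
        exists 0, (p g); split; first exact: span0.
        split; last by rewrite add0r.
        apply: (span_mono (A := atom (cf r1))); last exact: ACF Hall'.
        move=> z Hz; exists (cf r1); split => // E; apply: Hr1; rewrite -E; exact: Hcf.
have [y1 [y2 [Hy1 [Hy2 Ey]]]] := Hdec _ Hin.
have : e i - y1 = 0.
  apply: (Dir (c := c)).
  - apply: subB; [exact: subspace_Jsp | apply: spanS; rewrite -Hi; exact: atom_e | exact: HS1].
  - by rewrite Ey addrAC subrr add0r.
by move/eqP; rewrite subr_eq0 => /eqP ->.
Qed.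

Lemma mu_sub c : mu_qm p e (Vs c) (Is c).
Proof.
move=> b1 j b2 js i Hj Hjs Hi Hmap.
have HA : forall (r : 'I_n) x, ocons j js r = Some x -> cls x = c.
  move=> [[|q] Hq] x /= E.
  - by move: Hj; rewrite E.
  - by have := Hjs q Hq; rewrite E.
have Hinj : inJ (fun _ => True) j by case: j {Hj HA Hmap}.
have Hinjs : forall r, (r < n.-1)%N -> inJ (fun _ => True) (js r) by move=> r _; case: (js r).
case: b1 Hmap => [] ; case: b2 => [] //= Hmap.
- case: Hmap => k [s [Hk Hb]].
  have HL := LIFT (js0 := ocons (Some i) (ocons j (skipk k js))) (i := i) erefl ((Hb.2 (js k)).2 erefl).
  have [s' Hs'] := @Hmu true j false js i Hinj Hinjs Logic.I
     (ex_intro _ k (ex_intro _ s (conj Hk (conj Logic.I HL)))).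
  by exists s'; exact: DEC HA Hi Hs'.
- case: Hmap => s Hb.
  have HL := LIFT (js0 := ocons (Some i) js) (i := i) erefl ((Hb.2 j).2 erefl).
  have [s' Hs'] := @Hmu false j true js i Hinj Hinjs Logic.I (ex_intro _ s (conj Logic.I HL)).
  by exists s'; exact: DEC HA Hi Hs'.
- case: Hmap => s [[y [Hy Hnz]] [_ Hl]].
  exists s; apply: (line_inv (subspace_prodsp _ _ _) Hy (Hl _ Hy)); exact/eqP.
Qed.

Lemma ideal_Js c : ideal grade p (fun _ => True) (Js c).
Proof.
split.
  split; first exact: subspace_Js.
  move=> x /Js_Jsp; apply: span_mono => y Hy; split; first by apply/Js_Jsp; exact: spanS.
  by case: Hy => d [_ [_ ->]]; exact: dval_homog.
split; first by [].
move=> s; apply: prodsp_sub; first exact: subspace_Js.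
move=> x Hx; pose rho := (s^-1 ord0)%g.
apply/Js_Jsp; apply: (one_slot (c := c) (Arho := atom c) (rho := rho)).
- exact: subspace_Jsp.
- by [].
- rewrite ffunE /rho permKV; apply/Js_Jsp; exact: (Hx ord0).
- move=> g _ Hall; exact: ACF.
Qed.

Lemma inherited_Js c : cls c = c -> inherited grade e V (fun _ => True) (Js c) (Vs c) (Is c).
Proof.
move=> Hc; split.
  split; first exact: subspace_span.
  move=> x; apply: span_mono => z Hz; split; first exact: spanS.
  by case: Hz => ix [_ [_ ->]]; exact: prod_homog.
split; first exact: Vs_V.
split; first by [].
split.
  split; first exact: subspace_span.
  move=> x; apply: span_mono => z Hz; split; first exact: spanS.
  by case: Hz => i [_ ->]; exact: e_homog.
split.
  exists (e c); split; first by apply: spanS; exists c.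
  exact/eqP/e_neq0.
split.
  move=> x Hv Hw; apply: VW0; first exact: Vs_V Hv.
  by apply: (span_mono _ Hw) => z [i [_ ->]]; exists i.
by move=> x; split.
Qed.

Lemma atom_cls_fix c z : atom c z -> cls c = c.
Proof.
move=> [[b|[c' ix]] [Hwf [Hc _]]] /=; rewrite /= in Hc; subst c; first exact: cls_idem.
by case: Hwf => _ Hcl; rewrite -(Hcl ord0) cls_idem.
Qed.

Definition Kt := {i : I | cls i == i}.

Lemma main_result :
  exists (K : eqType) (Js' Vs' : K -> L -> Prop) (Is' : K -> I -> Prop),
    (forall k, minimal_ideal grade p e V (Js' k) (Vs' k) (Is' k) /\ mu_qm p e (Vs' k) (Is' k)) /\
    direct_sum Js'.
Proof.
exists Kt, (fun k => Js (val k)), (fun k => Vs (val k)), (fun k => Is (val k)).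
split.
  move=> k; split; last exact: mu_sub.
  split; first exact: ideal_Js.
  split; first exact: inherited_Js (eqP (valP k)).
  exact: minimal.
split.
  move=> x; apply: (span_mono _ (L_span x)) => z [c Hz].
  have Hc := atom_cls_fix Hz.
  exists (exist _ c (introT eqP Hc)); apply/Js_Jsp; exact: spanS.
move=> ks z Huq Hz Hsum k0 Hk0.
apply: (Dir (c := val k0)); first by apply/Js_Jsp.
have -> : z k0 = - \sum_(k <- ks | k != k0) z k.
  by apply/eqP; rewrite -addr_eq0 -(bigD1_seq _ Hk0 Huq) Hsum.
apply: subN; first exact: subspace_span.
apply: sub_big; first exact: subspace_span.
move=> k Hk; apply: (span_mono (A := atom (val k))); last by apply/Js_Jsp.
move=> y Hy; exists (val k); split => // E; apply: (negP Hk); apply/eqP; exact: val_inj.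
Qed.

End Main.

Theorem theorem4p4 (F : fieldType) (L : lmodType F) (G : zmodType)
  (grade : G -> L -> Prop) (n : nat) (p : {ffun 'I_n -> L} -> L)
  (eps : G -> G -> F) (I : eqType) (e : I -> L) (V : L -> Prop) :
  (2 <= n)%N ->
  is_grading grade ->
  multilinear p ->
  graded_product grade p ->
  bicharacter eps ->
  color_gLt_algebra grade p eps ->
  qm_basis grade p e (fun _ => True) V (fun _ => True) ->
  mu_qm p e V (fun _ => True) ->
  (forall x, center p x -> x = 0) ->
  tight p e V (fun _ => True) ->
  exists (K : eqType) (Js Vs : K -> L -> Prop) (Is : K -> I -> Prop),
    (forall k, minimal_ideal grade p e V (Js k) (Vs k) (Is k) /\ mu_qm p e (Vs k) (Is k)) /\
    direct_sum Js.
Proof.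
case: n p => [|m] p Hn; first by [].
move=> Hgr Hml Hgp Heps HgLt Hqm Hmu Hcen Htight.
have m_gt0 : (0 < m)%N by [].
exact: (main_result m_gt0 Hml Hgp HgLt Hqm Hmu Hcen Htight).
Qed.
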